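(* Let $n\ge2$ and $\mu\in{]0,\infty[}$. The polynomial $$f=-\tfrac{1}{16}\big(z_0^2\overline{z_1}^2-\overline{z_0}^2z_1^2\big)^2\big(|z_0|^2|z_1|^2-3|z_1|^4\big)+|z_1|^{12}$$ (pointwise products) lies in $\mathcal{R}_{0,\mu}$, i.e. it is real-valued, in $\bigoplus_k\mathscr{P}^{k,k}(\mathbb{C}^{1+n})$ and satisfies $f(w)\ge0$ for all $w\in\mathbb{C}^{1+n}$ with $\mathcal{J}(w)=\mu$, but $f$ cannot be written as $\sum_{j=1}^\ell\overline{g_j}g_j+(\mathcal{J}-\mu)h$ with $\ell\in\mathbb{N}_0$, $g_j\in\bigoplus_k\mathscr{P}^{k,k}(\mathbb{C}^{1+n})$ and real-valued $h\in\bigoplus_k\mathscr{P}^{k,k}(\mathbb{C}^{1+n})$.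
   Context: $z_0,\dots,z_n$ are the complex coordinates on $\mathbb{C}^{1+n}$ and $\overline{z_j}$ their conjugates; $\mathscr{P}^{k,k}(\mathbb{C}^{1+n})$ is the complex span of monomials $z^K\overline{z}^L$ with $|K|=|L|=k$ ($K,L\in\mathbb{N}_0^{1+n}$); $\bigoplus_k\mathscr{P}^{k,k}(\mathbb{C}^{1+n})$ is the algebra of $\mathrm{U}(1)$-invariant polynomials, with pointwise product. $\mathcal{J}=\sum_{j=0}^n z_j\overline{z_j}$. $\mathcal{R}_{0,\mu}$ denotes the set of real-valued elements of $\bigoplus_k\mathscr{P}^{k,k}(\mathbb{C}^{1+n})$ that are nonnegative on the level set $\{w:\mathcal{J}(w)=\mu\}$ (the quadratic module of the classical reduction to $\mathbb{CP}^n$). The second assertion says $f\notin(\bigoplus_k\mathscr{P}^{k,k})^{++}_{\mathrm H}+(\langle\mathcal{J}-\mu\rangle)_{\mathrm H}$, where the ideal is generated with respect to the pointwise product. *)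

(* Defs.v *)
From HB Require Import structures.
From mathcomp Require Import all_boot all_order all_algebra.
From mathcomp Require Import complex.
From mathcomp Require Import reals.
From mathcomp Require Import mpoly.
Set Implicit Arguments. Unset Strict Implicit. Unset Printing Implicit Defensive.
Import Order.TTheory GRing.Theory Num.Theory.
Local Open Scope ring_scope.

(* Polynomials in z_0..z_n, zbar_0..zbar_n are formal polynomials in 2(1+n)
   variables: variable (lshift _ j) stands for z_j, variable (rshift _ j) for
   conj z_j. *)
Definition cpoly (R : realType) (n : nat) := {mpoly R[i][n.+1 + n.+1]}.

Definition zvar (R : realType) (n : nat) (j : 'I_n.+1) : cpoly R n :=
  'X_(lshift n.+1 j).
Definition zbvar (R : realType) (n : nat) (j : 'I_n.+1) : cpoly R n :=
  'X_(rshift n.+1 j).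

Definition zpt (R : realType) (n : nat) (w : 'I_n.+1 -> R[i])
  : 'I_(n.+1 + n.+1) -> R[i] :=
  fun k => match split k with inl j => w j | inr j => (w j)^* end.

Definition ev (R : realType) (n : nat) (p : cpoly R n) (w : 'I_n.+1 -> R[i]) : R[i] :=
  p.@[zpt w].

(* p lies in the direct sum of the P^{k,k}: every monomial z^K zbar^L
   occurring in p has |K| = |L|. *)
Definition inPkk (R : realType) (n : nat) (p : cpoly R n) : Prop :=
  forall m : 'X_{1.. n.+1 + n.+1}, m \in msupp p ->
    (\sum_(j < n.+1) m (lshift n.+1 j) = \sum_(j < n.+1) m (rshift n.+1 j))%N.

Definition realvalued (R : realType) (n : nat) (p : cpoly R n) : Prop :=
  forall w : 'I_n.+1 -> R[i], ev p w \is Num.real.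

Definition Jpoly (R : realType) (n : nat) : cpoly R n :=
  \sum_(j < n.+1) zvar R j * zbvar R j.

Definition fpoly (R : realType) (n : nat) : cpoly R n :=
  let z0 := zvar R (ord0 : 'I_n.+1) in
  let z1 := zvar R (inord 1 : 'I_n.+1) in
  let zb0 := zbvar R (ord0 : 'I_n.+1) in
  let zb1 := zbvar R (inord 1 : 'I_n.+1) in
  - (16%:R)^-1%:MP * (z0 ^+ 2 * zb1 ^+ 2 - zb0 ^+ 2 * z1 ^+ 2) ^+ 2
      * (z0 * zb0 * (z1 * zb1) - 3%:R%:MP * (z1 * zb1) ^+ 2)
  + (z1 * zb1) ^+ 6.

(* Main.v *)
Require Import Defs.
From HB Require Import structures.
From mathcomp Require Import all_boot all_order all_algebra.
From mathcomp Require Import complex reals mpoly.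
From mathcomp Require Import zify ring lra.
Set Implicit Arguments. Unset Strict Implicit. Unset Printing Implicit Defensive.
Import Order.TTheory GRing.Theory Num.Theory.
Local Open Scope ring_scope.

Section PolyLemmas.
Variable C : numClosedFieldType.

Definition star (p : {poly C}) : {poly C} := map_poly Num.conj p.

Lemma coef_star p i : (star p)`_i = (p`_i)^*.
Proof. by rewrite /star coef_map_id0 // rmorph0. Qed.

Lemma coef_sq_gen (p : {poly C}) m :
  (forall j, (j <= m.*2)%N -> j != m -> p`_j * (p`_(m.*2 - j))^* = 0) ->
  (p * star p)`_(m.*2) = p`_m * (p`_m)^*.
Proof.
move=> H; rewrite coefM.
have hm : (m < (m.*2).+1)%N by rewrite ltnS -addnn leq_addr.
rewrite (bigD1 (Ordinal hm)) //= big1 ?addr0.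
  by rewrite coef_star -addnn addnK.
move=> [j hj] /= hne; rewrite coef_star; apply: H.
  by rewrite -ltnS.
by apply: contra hne => /eqP hjm; apply/eqP/val_inj.
Qed.

Lemma coef_sq_low (p : {poly C}) m :
  (forall k, (k < m)%N -> p`_k = 0) ->
  (p * star p)`_(m.*2) = p`_m * (p`_m)^*.
Proof.
move=> H; apply: coef_sq_gen => j hj hne.
case: (ltngtP j m) => hjm.
- by rewrite H // mul0r.
- have -> : p`_(m.*2 - j) = 0 by apply: H; rewrite -addnn; lia.
  by rewrite rmorph0 mulr0.
- by move/eqP: hne.
Qed.

Lemma coef_sq_top (p : {poly C}) m :
  (size p <= m.+1)%N ->
  (p * star p)`_(m.*2) = p`_m * (p`_m)^*.
Proof.
move=> H; apply: coef_sq_gen => j hj hne.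
case: (ltngtP j m) => hjm.
- have -> : p`_(m.*2 - j) = 0.
    by apply: nth_default; apply: leq_trans H _; rewrite -addnn; lia.
  by rewrite rmorph0 mulr0.
- by rewrite nth_default ?mul0r //; apply: leq_trans H _.
- by move/eqP: hne.
Qed.

Lemma sum_conj_eq0 (I : finType) (F : I -> C) :
  \sum_i F i * (F i)^* = 0 -> forall i, F i = 0.
Proof.
move=> H i; have := @psumr_eq0P _ _ predT _ (fun i _ => mul_conjC_ge0 (F i)) H i isT.
by move/eqP; rewrite mul_conjC_eq0 => /eqP.
Qed.

Lemma sos_coef_low (I : finType) (P : I -> {poly C}) m :
  (forall i k, (k < m)%N -> (P i)`_k = 0) ->
  (\sum_i P i * star (P i))`_(m.*2) = \sum_i (P i)`_m * ((P i)`_m)^*.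
Proof.
by move=> H; rewrite coef_sum; apply: eq_bigr => i _; rewrite coef_sq_low // => k; apply: H.
Qed.

Lemma sos_low (I : finType) (P : I -> {poly C}) (Q : {poly C}) m :
  \sum_i P i * star (P i) = Q ->
  (forall k, (k < m.*2)%N -> Q`_k = 0) ->
  (forall i k, (k < m)%N -> (P i)`_k = 0) /\
  \sum_i (P i)`_m * ((P i)`_m)^* = Q`_(m.*2).
Proof.
move=> HQ HQ0.
have low : forall k i, (k < m)%N -> (P i)`_k = 0.
  elim/ltn_ind => k IH i hk.
  apply: (sum_conj_eq0 (F := fun i => (P i)`_k)) => /=.
  rewrite -sos_coef_low; last by move=> j k' hk'; apply: IH => //; lia.
  by rewrite HQ HQ0 //; rewrite -!addnn; lia.
split; first by move=> i k; apply: low.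
by rewrite -HQ sos_coef_low // => i k; apply: low.
Qed.

Lemma size_le_coef (p : {poly C}) s :
  (size p <= s.+1)%N -> p`_s = 0 -> (size p <= s)%N.
Proof.
move=> hs h0; rewrite leqNgt; apply/negP => hgt.
have hsz : size p = s.+1 by apply/eqP; rewrite eqn_leq hs hgt.
have : lead_coef p != 0 by rewrite lead_coef_eq0 -size_poly_eq0 hsz.
by rewrite /lead_coef hsz /= h0 eqxx.
Qed.

Lemma sos_size (I : finType) (P : I -> {poly C}) (Q : {poly C}) s :
  \sum_i P i * star (P i) = Q ->
  (forall k, (s.*2 <= k)%N -> Q`_k = 0) ->
  forall i, (size (P i) <= s)%N.
Proof.
move=> HQ HQ0.
suff H : forall d, (forall i, (size (P i) <= s + d)%N) -> forall i, (size (P i) <= s)%N.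
  apply: (H (\sum_j size (P j))%N) => i; apply: leq_trans (leq_addl s _).
  by rewrite (bigD1 i) //= leq_addr.
elim=> [|d IH] Hd; first by move=> i; rewrite -(addn0 s) Hd.
apply: IH => i.
have hc : forall j, (P j)`_(s + d) = 0.
  apply: (sum_conj_eq0 (F := fun j => (P j)`_(s + d))) => /=.
  transitivity (Q`_((s + d).*2)); last by apply: HQ0; rewrite -!addnn; lia.
  rewrite -HQ coef_sum; apply: eq_bigr => j _; rewrite coef_sq_top //.
  by rewrite -addnS Hd.
by apply: size_le_coef; [rewrite -addnS Hd | apply: hc].
Qed.

Lemma poly_eq_nat (p q : {poly C}) :
  (forall k : nat, p.[k%:R] = q.[k%:R]) -> p = q.
Proof.
move=> H; apply/eqP; rewrite -subr_eq0; apply/negPn/negP => hne.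
pose rs : seq C := [seq k%:R | k <- iota 0 (size (p - q))].
have h1 : all (root (p - q)) rs.
  by apply/allP => x /mapP [k _ ->]; rewrite rootE !hornerE H subrr.
have h2 : uniq rs.
  by rewrite map_inj_uniq ?iota_uniq // => a b /eqP; rewrite eqr_nat => /eqP.
by have := max_poly_roots hne h1 h2; rewrite size_map size_iota ltnn.
Qed.

End PolyLemmas.

Section Motzkin.
Variable C : numClosedFieldType.

Definition ev2 (T : {poly {poly C}}) (x y : C) : C := (map_poly (fun q => q.[y]) T).[x].

Definition motz (x y : C) : C := x^+4 * y^+2 + x^+2 * y^+4 - 3%:R * x^+2 * y^+2 + 1.

Lemma horner_star_nat (p : {poly C}) (k : nat) : (star p).[k%:R] = (p.[k%:R])^*.
Proof.
by rewrite /star -{1}(rmorph_nat (Num.conj : {rmorphism C -> C}) k) horner_map.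
Qed.

Lemma sos_nat (I : finType) (P : I -> {poly C}) (Q : {poly C}) :
  (forall k : nat, \sum_i (P i).[k%:R] * ((P i).[k%:R])^* = Q.[k%:R]) ->
  \sum_i P i * star (P i) = Q.
Proof.
move=> H; apply: poly_eq_nat => k; rewrite -H horner_sum; apply: eq_bigr => i _.
by rewrite hornerM horner_star_nat.
Qed.

Lemma motzkin_contra (I : finType) (T : I -> {poly {poly C}}) (c : C) :
  0 < c ->
  (forall a b : nat, \sum_i ev2 (T i) a%:R b%:R * (ev2 (T i) a%:R b%:R)^* = c * motz a%:R b%:R) ->
  False.
Proof.
move=> c0 H.
pose A i := map_poly (fun q : {poly C} => q.[0]) (T i).
have hA : \sum_i A i * star (A i) = c%:P.
  apply: sos_nat => k; rewrite hornerC.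
  transitivity (c * motz k%:R 0%:R); last by rewrite /motz; ring.
  by rewrite -H; apply: eq_bigr => i _; rewrite /ev2.
have hA1 : forall i, ((T i)`_1).[0] = 0.
  move=> i; have hs : (size (A i) <= 1)%N.
    by apply: (sos_size (s := 1) hA) => k hk; rewrite coefC; case: k hk.
  by have := nth_default 0 hs; rewrite /A coef_map_id0 ?horner0.
pose B i := (T i)`_0.
have hB : \sum_i B i * star (B i) = c%:P.
  apply: sos_nat => k; rewrite hornerC.
  transitivity (c * motz 0%:R k%:R); last by rewrite /motz; ring.
  by rewrite -H; apply: eq_bigr => i _; rewrite /ev2 horner_coef0 coef_map_id0 ?horner0.
have hB1 : forall i, (B i)`_1 = 0.
  move=> i; have hs : (size (B i) <= 1)%N.
    by apply: (sos_size (s := 1) hB) => k hk; rewrite coefC; case: k hk.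
  by have := nth_default 0 hs.
pose D i := \sum_(k < (size (T i)).+2) (T i)`_k * 'X^k.
have hDev : forall i x, (D i).[x] = ev2 (T i) x x.
  move=> i x; rewrite /ev2 [RHS](horner_coef_wide (n := (size (T i)).+2)); last first.
    by rewrite /map_poly (leq_trans (size_poly _ _)) // -addn2 leq_addr.
  rewrite /D horner_sum; apply: eq_bigr => k _.
  by rewrite hornerM hornerXn coef_map_id0 ?horner0.
have hD1 : forall i, (D i)`_1 = 0.
  move=> i; rewrite /D coef_sum big_ord_recl big_ord_recl /= big1 ?addr0.
    rewrite !coefMXn /= subn0 subnn.
    have := hB1 i; rewrite /B => ->; rewrite add0r.
    by have := hA1 i; rewrite horner_coef0.
  by move=> k _; rewrite coefMXn.
pose Qd : {poly C} := c%:P * (1%:P - 3%:R%:P * 'X^4 + 2%:R%:P * 'X^6).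
have hD : \sum_i D i * star (D i) = Qd.
  apply: sos_nat => k.
  have := H k k; rewrite /motz => hk.
  transitivity (c * motz k%:R k%:R); last first.
    rewrite /motz /Qd !(hornerM, hornerD, hornerN, hornerC, hornerXn, hornerX); ring.
  rewrite -H; apply: eq_bigr => i _; by rewrite hDev.
have hD4 : forall i, (D i)`_4 = 0.
  move=> i; apply: nth_default.
  apply: (sos_size (s := 4) hD) => k hk.
  rewrite /Qd coefCM !coefD !coefN coefC !coefCM !coefXn.
  have -> : (k == 4%N) = false by apply/eqP; lia.
  have -> : (k == 6%N) = false by apply/eqP; lia.
  by case: k hk => // k _; rewrite !mulr0 !subr0 addr0 mulr0.
have hQ4 : Qd`_4 = - (3%:R * c).
  rewrite /Qd coefCM !coefD !coefN coefC !coefCM !coefXn /=; ring.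
have : 0 <= Qd`_4.
  rewrite -hD coef_sum (_ : 4%N = 2.*2) //; apply: sumr_ge0 => i _.
  rewrite coef_sq_gen ?mul_conjC_ge0 //.
  move=> j hj hne; case: j hj hne => [|[|[|[|[|j]]]]] //= _ _.
  - by rewrite hD4 rmorph0 mulr0.
  - by rewrite hD1 mul0r.
  - by rewrite hD1 rmorph0 mulr0.
  - by rewrite hD4 mul0r.
rewrite hQ4 oppr_ge0 => h.
have : 0 < 3%:R * c by rewrite mulr_gt0 // ltr0n.
by move=> h'; have := lt_le_trans h' h; rewrite ltxx.
Qed.

End Motzkin.

Section Ev.
Variable R : realType.
Variable n : nat.
Local Notation C := R[i].

Lemma conj_real (r : R) : (r%:C%C)^* = r%:C%C.
Proof. by apply: conj_Creal; apply/complex_realP; exists r. Qed.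

Lemma zpt_l (w : 'I_n.+1 -> C) j : zpt w (lshift n.+1 j) = w j.
Proof. by rewrite /zpt (unsplitK (inl _ j)). Qed.

Lemma zpt_r (w : 'I_n.+1 -> C) j : zpt w (rshift n.+1 j) = (w j)^*.
Proof. by rewrite /zpt (unsplitK (inr _ j)). Qed.

Lemma evD (p q : cpoly R n) w : ev (p + q) w = ev p w + ev q w.
Proof. exact: mevalD. Qed.
Lemma evB (p q : cpoly R n) w : ev (p - q) w = ev p w - ev q w.
Proof. exact: mevalB. Qed.
Lemma evN (p : cpoly R n) w : ev (- p) w = - ev p w.
Proof. exact: mevalN. Qed.
Lemma evM (p q : cpoly R n) w : ev (p * q) w = ev p w * ev q w.
Proof. exact: mevalM. Qed.
Lemma evX (p : cpoly R n) k w : ev (p ^+ k) w = ev p w ^+ k.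
Proof. rewrite /ev; exact: rmorphXn. Qed.
Lemma evC (c : C) w : ev (c%:MP : cpoly R n) w = c.
Proof. exact: mevalC. Qed.
Lemma ev_sum (I : finType) (F : I -> cpoly R n) w :
  ev (\sum_i F i) w = \sum_i ev (F i) w.
Proof. rewrite /ev; exact: rmorph_sum. Qed.

Lemma ev_sum_seq (T : Type) (s : seq T) (F : T -> cpoly R n) w :
  ev (\sum_(m <- s) F m) w = \sum_(m <- s) ev (F m) w.
Proof. rewrite /ev; exact: rmorph_sum. Qed.

Lemma ev_zvar (w : 'I_n.+1 -> C) j : ev (zvar R j) w = w j.
Proof. by rewrite /ev /zvar mevalXU zpt_l. Qed.

Lemma ev_zbvar (w : 'I_n.+1 -> C) j : ev (zbvar R j) w = (w j)^*.
Proof. by rewrite /ev /zbvar mevalXU zpt_r. Qed.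

Lemma ev_J (w : 'I_n.+1 -> C) : ev (Jpoly R n) w = \sum_j w j * (w j)^*.
Proof.
rewrite /Jpoly ev_sum; apply: eq_bigr => j _.
by rewrite evM ev_zvar ev_zbvar.
Qed.

Definition fform (z0 z1 c0 c1 : C) : C :=
  - (16%:R)^-1 * (z0 ^+ 2 * c1 ^+ 2 - c0 ^+ 2 * z1 ^+ 2) ^+ 2
      * (z0 * c0 * (z1 * c1) - 3%:R * (z1 * c1) ^+ 2)
  + (z1 * c1) ^+ 6.

Lemma ev_f (w : 'I_n.+1 -> C) : ev (fpoly R n) w =
  fform (w ord0) (w (inord 1)) (w ord0)^* (w (inord 1))^*.
Proof.
rewrite /fpoly /fform.
by rewrite !(evD, evN, evM, evB, evX, evC, ev_zvar, ev_zbvar).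
Qed.

Lemma ev_scale (t : R) (w : 'I_n.+1 -> C) p :
  ev p (fun j => t%:C%C * w j) =
  \sum_(m <- msupp p) p@_m * (t%:C%C ^+ mdeg m * \prod_i (zpt w i) ^+ (m i)).
Proof.
rewrite /ev mevalE; apply: eq_bigr => m _; congr (_ * _).
have hz : forall i, zpt (fun j => t%:C%C * w j) i = t%:C%C * zpt w i.
  by move=> i; rewrite /zpt; case: (split i) => j //; rewrite rmorphM /= conj_real.
under eq_bigr => i _ do rewrite hz exprMn.
by rewrite big_split /= prodrXr mdegE.
Qed.

Lemma inPkk_deg (p : cpoly R n) m : inPkk p -> m \in msupp p ->
  mdeg m = (\sum_(j < n.+1) m (lshift n.+1 j))%N.*2.
Proof.
move=> H hm; rewrite mdegE big_split_ord /= (H m hm).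
by rewrite -addnn.
Qed.

Definition Ghom (mu : R) (K : nat) (p : cpoly R n) : cpoly R n :=
  \sum_(m <- msupp p) ((p@_m * (mu%:C%C) ^+ (mdeg m)./2)%:MP
     * (Jpoly R n) ^+ (K - (mdeg m)./2) * 'X_[m]).

Lemma ev_Ghom mu K p (w : 'I_n.+1 -> C) : ev (Ghom mu K p) w =
  \sum_(m <- msupp p) (p@_m * (mu%:C%C) ^+ (mdeg m)./2
     * (ev (Jpoly R n) w) ^+ (K - (mdeg m)./2) * \prod_i (zpt w i) ^+ (m i)).
Proof.
rewrite /Ghom ev_sum_seq; apply: eq_bigr => m _.
by rewrite !evM evX evC /ev mevalX.
Qed.

Lemma hom_key (mu r : R) K (p : cpoly R n) (w : 'I_n.+1 -> C) : inPkk p ->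
  (forall m, m \in msupp p -> (mdeg m <= K.*2)%N) -> 0 < mu -> 0 < r ->
  ev (Jpoly R n) w = r%:C%C ->
  (r%:C%C) ^+ K * ev p (fun j => (Num.sqrt (mu / r))%:C%C * w j) = ev (Ghom mu K p) w.
Proof.
move=> Hp Hdeg mu0 r0 HJ.
rewrite ev_scale ev_Ghom mulr_sumr; apply: eq_big_seq => m hm.
rewrite (inPkk_deg Hp hm) half_double HJ.
set e := (\sum_(j < n.+1) m (lshift n.+1 j))%N.
have he : (e <= K)%N by rewrite -leq_double -(inPkk_deg Hp hm) Hdeg.
have hmr : 0 <= mu / r by rewrite divr_ge0 // ltW.
have hs : ((Num.sqrt (mu / r))%:C%C) ^+ 2 = (mu / r)%:C%C.
  by rewrite -{2}(sqr_sqrtr hmr) rmorphXn.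
rewrite -mul2n exprM hs.
rewrite -{1}(subnK he) exprD.
set P := \prod_i _.
rewrite rmorphM fmorphV expr_div_n.
have hr : (r%:C%C) ^+ e != 0 by rewrite expf_neq0 // eq_complex /= negb_and gt_eqF.
move: ((r%:C%C) ^+ e) hr => X hX.
move: ((r%:C%C) ^+ (K - e)) => Y.
by field.
Qed.

End Ev.

Section Fam.
Variable R : realType.
Variable n : nat.
Hypothesis hn : (2 <= n)%N.
Local Notation C := R[i].

Definition phi2 (x y : C) : {rmorphism {poly {poly C}} -> C} :=
  horner_eval x \o map_poly (horner_eval y).
Definition phi3 (e x y : C) : {rmorphism {poly {poly {poly C}}} -> C} :=
  horner_eval e \o map_poly (phi2 x y).

Lemma phi2E T x y : phi2 x y T = ev2 T x y.
Proof. by []. Qed.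

Definition Ep : {poly {poly {poly C}}} := locked 'X.
Definition Lp : {poly {poly {poly C}}} := locked ('X)%:P.
Definition Lp' : {poly {poly {poly C}}} := locked ('X)%:P%:P.
Definition Ip : {poly {poly {poly C}}} := locked ('i)%:P%:P%:P.

Lemma phi2C x y c : phi2 x y (c%:P%:P) = c.
Proof. by rewrite /phi2 /= (map_polyC (horner_eval y)) horner_evalE hornerC /= horner_evalE hornerC. Qed.
Lemma phi2X x y : phi2 x y 'X = x.
Proof. by rewrite /phi2 /= (map_polyX (horner_eval y)) horner_evalE hornerX. Qed.
Lemma phi2Y x y : phi2 x y ('X%:P) = y.
Proof. by rewrite /phi2 /= (map_polyC (horner_eval y)) horner_evalE hornerC /= horner_evalE hornerX. Qed.
Lemma phi3C e x y c : phi3 e x y (c%:P%:P%:P) = c.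
Proof. rewrite /phi3 /= (map_polyC (phi2 x y)) horner_evalE hornerC; exact: phi2C. Qed.
Lemma phi3E e x y : phi3 e x y Ep = e.
Proof. by rewrite /Ep -lock /phi3 /= (map_polyX (phi2 x y)) horner_evalE hornerX. Qed.
Lemma phi3L e x y : phi3 e x y Lp = x.
Proof. by rewrite /Lp -lock /phi3 /= (map_polyC (phi2 x y)) horner_evalE hornerC; exact: phi2X. Qed.
Lemma phi3L' e x y : phi3 e x y Lp' = y.
Proof. by rewrite /Lp' -lock /phi3 /= (map_polyC (phi2 x y)) horner_evalE hornerC; exact: phi2Y. Qed.
Lemma phi3I e x y : phi3 e x y Ip = 'i.
Proof. by rewrite /Ip -lock; exact: phi3C. Qed.


Definition Sv (b : bool) (j : 'I_n.+1) : {poly {poly {poly C}}} :=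
  if j == ord0 then Ep * (Lp + (if b then - Ip else Ip) * Lp')
  else if j == inord 1 then Ep else if j == inord 2 then 1 else 0.

Definition sym (k : 'I_(n.+1 + n.+1)) :=
  match split k with inl j => Sv false j | inr j => Sv true j end.

Definition Phi (p : cpoly R n) := mmap (fun c => c%:P%:P%:P) sym p.

Definition wfam (k a b : nat) (j : 'I_n.+1) : C :=
  if j == ord0 then k%:R * (a%:R + 'i * b%:R)
  else if j == inord 1 then k%:R else if j == inord 2 then 1 else 0.

Lemma conj_fam (k a b : nat) :
  (k%:R * (a%:R + 'i * b%:R))^* = k%:R * (a%:R - 'i * b%:R) :> C.
Proof. by rewrite rmorphM rmorphD rmorphM /= !rmorph_nat conjCi mulNr. Qed.

Lemma phi3_sym k a b i : phi3 k%:R a%:R b%:R (sym i) = zpt (wfam k a b) i.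
Proof.
rewrite /sym /zpt /wfam /Sv; case: (split i) => j.
  case: (j == ord0).
    rewrite rmorphM phi3E; congr (_ * _); rewrite rmorphD phi3L; congr (_ + _).
    by rewrite rmorphM; congr (_ * _); [exact: phi3I | exact: phi3L'].
  case: (j == inord 1); first by rewrite phi3E.
  by case: (j == inord 2); [exact: rmorph1 | exact: rmorph0].
case: (j == ord0).
  rewrite conj_fam rmorphM phi3E; congr (_ * _); rewrite rmorphD phi3L; congr (_ + _).
  rewrite rmorphM rmorphN mulNr; congr (- (_ * _)); [exact: phi3I | exact: phi3L'].
case: (j == inord 1); first by rewrite phi3E /= rmorph_nat.
by case: (j == inord 2); [rewrite conjC1; exact: rmorph1 | rewrite conjC0; exact: rmorph0].
Qed.

Lemma phi3_Phi p k a b : phi3 k%:R a%:R b%:R (Phi p) = ev p (wfam k a b).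
Proof.
rewrite /Phi /mmap rmorph_sum /ev mevalE; apply: eq_bigr => m _.
rewrite rmorphM phi3C /mmap1 rmorph_prod; congr (_ * _); apply: eq_bigr => i _.
by rewrite rmorphXn phi3_sym.
Qed.

End Fam.

Section Fam2.
Variable R : realType.
Variable n : nat.
Hypothesis hn : (2 <= n)%N.
Local Notation C := R[i].

Lemma ord_facts :
  [/\ (inord 1 == ord0 :> 'I_n.+1) = false, (inord 2 == ord0 :> 'I_n.+1) = false
    & (inord 2 == inord 1 :> 'I_n.+1) = false].
Proof.
have h1 : val (inord 1 : 'I_n.+1) = 1%N by apply: inordK; lia.
have h2 : val (inord 2 : 'I_n.+1) = 2%N by apply: inordK; lia.
by split; rewrite -val_eqE /= ?h1 ?h2.
Qed.

Lemma ev_J_fam k a b :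
  ev (Jpoly R n) (@wfam R n k a b) = (((k^2 * (a^2 + b^2) + k^2 + 1)%N%:R : R)%:C)%C.
Proof.
have [o1 o2 o21] := ord_facts.
rewrite ev_J (bigD1 ord0) //= (bigD1 (inord 1)) /=; last by rewrite o1.
rewrite (bigD1 (inord 2)) /=; last by rewrite o2 o21.
rewrite big1; last first.
  move=> j /andP [/andP [hj0 hj1] hj2]; rewrite /wfam.
  by rewrite (negbTE hj0) (negbTE hj1) (negbTE hj2) mul0r.
rewrite /wfam eqxx o1 o2 o21 !eqxx conj_fam conjC1 !rmorph_nat addr0 mulr1.
rewrite !(natrD, natrM, natrX).
have -> : k%:R * (a%:R + 'i * b%:R) * (k%:R * (a%:R - 'i * b%:R)) =
          (k%:R ^+ 2 * (a%:R ^+ 2 - 'i ^+ 2 * b%:R ^+ 2) : C) by ring.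
rewrite sqrCi; ring.
Qed.

Lemma ev_f_fam k a b :
  ev (fpoly R n) (@wfam R n k a b) = (k%:R ^+ 12 * motz a%:R b%:R : C).
Proof.
have [o1 o2 o21] := ord_facts.
rewrite ev_f /wfam eqxx o1 eqxx conj_fam rmorph_nat /fform /motz.
set x : C := k%:R; set u : C := a%:R; set v : C := b%:R.
have -> : (x * (u + 'i * v)) ^+ 2 * x ^+ 2 - (x * (u - 'i * v)) ^+ 2 * x ^+ 2 =
          'i * (4%:R * x ^+ 4 * u * v) by ring.
have -> : x * (u + 'i * v) * (x * (u - 'i * v)) = x ^+ 2 * (u ^+ 2 - 'i ^+ 2 * v ^+ 2)
  by ring.
rewrite exprMn sqrCi.
by field.
Qed.

End Fam2.

Section Hom.
Variable R : realType.
Variable n : nat.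
Local Notation C := R[i].

Lemma conj_scale (t : R) (x : C) : ((t%:C)%C * x)^* = (t%:C)%C * x^*.
Proof. by rewrite rmorphM /= conj_real. Qed.

Lemma hom_identity (mu : R) (l : nat) (g : 'I_l -> cpoly R n) (h : cpoly R n) K :
  0 < mu -> (forall j, inPkk (g j)) ->
  (forall j m, m \in msupp (g j) -> (mdeg m <= K.*2)%N) -> (3 <= K)%N ->
  (forall w : 'I_n.+1 -> C,
     ev (fpoly R n) w =
       \sum_(j < l) (ev (g j) w)^* * ev (g j) w
       + (ev (Jpoly R n) w - (mu%:C)%C) * ev h w) ->
  forall (w : 'I_n.+1 -> C) (r : R), 0 < r -> ev (Jpoly R n) w = (r%:C)%C ->
  ((mu%:C)%C) ^+ 6 * ((r%:C)%C) ^+ (K.*2 - 6) * ev (fpoly R n) w =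
  \sum_(j < l) ev (Ghom mu K (g j)) w * (ev (Ghom mu K (g j)) w)^*.
Proof.
move=> mu0 Hg Hdeg HK Hid w r r0 HJ.
set t := Num.sqrt (mu / r).
pose w' := fun j => (t%:C)%C * w j.
have hmr : 0 <= mu / r by rewrite divr_ge0 // ltW.
have ht2 : ((t%:C)%C) ^+ 2 = ((mu / r)%:C)%C.
  by rewrite -{1}(sqr_sqrtr hmr) rmorphXn.
have hr0 : ((r%:C)%C) != 0 by rewrite eq_complex /= negb_and gt_eqF.
have HJ' : ev (Jpoly R n) w' = (mu%:C)%C.
  rewrite ev_J.
  under eq_bigr => j _ do rewrite /w' conj_scale mulrACA -expr2.
  rewrite -mulr_sumr -ev_J HJ ht2 -rmorphM; congr (_%:C)%C.
  by rewrite mulfVK // gt_eqF.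
have Hf : ev (fpoly R n) w' = ((t%:C)%C) ^+ 12 * ev (fpoly R n) w.
  by rewrite !ev_f /w' !conj_scale /fform; ring.
have := Hid w'; rewrite HJ' subrr mul0r addr0 Hf => Hw'.
under eq_bigr => j _ do rewrite -(hom_key (Hg j) (Hdeg j) mu0 r0 HJ) -/w'.
transitivity (((r%:C)%C) ^+ K.*2 * \sum_(j < l) (ev (g j) w')^* * ev (g j) w'); last first.
  rewrite mulr_sumr; apply: eq_bigr => j _.
  rewrite rmorphM rmorphXn /= conj_real -addnn exprD; ring.
rewrite -Hw'.
have -> : ((t%:C)%C) ^+ 12 = (((mu / r)%:C)%C) ^+ 6 by rewrite -ht2 -exprM.
have hK : (6 <= K.*2)%N by rewrite -addnn; lia.
rewrite -{2}(subnK hK) exprD rmorphM fmorphV expr_div_n.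
move: (((r%:C)%C) ^+ (K.*2 - 6)) => Y.
have hr6 : ((r%:C)%C) ^+ 6 != 0 by rewrite expf_neq0.
move: (((r%:C)%C) ^+ 6) hr6 => X hX.
by field.
Qed.

End Hom.

Lemma not_rep (R : realType) (n : nat) (mu : R) :
  (2 <= n)%N -> 0 < mu ->
  ~ (exists (l : nat) (g : 'I_l -> cpoly R n) (h : cpoly R n),
       (forall j, inPkk (g j)) /\ inPkk h /\ realvalued h /\
       forall w : 'I_n.+1 -> R[i],
         ev (fpoly R n) w =
           \sum_(j < l) (ev (g j) w)^* * ev (g j) w
           + (ev (Jpoly R n) w - (mu%:C)%C) * ev h w).
Proof.
move=> hn mu0 [l [g [h [Hg [Hh [Hhr Hid]]]]]].
pose K := (3 + \sum_(j < l) msize (g j))%N.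
have HK : (3 <= K)%N by rewrite leq_addr.
have Hdeg : forall j m, m \in msupp (g j) -> (mdeg m <= K.*2)%N.
  move=> j m hm; have h1 := msize_mdeg_lt hm.
  have h2 : (msize (g j) <= \sum_(j < l) msize (g j))%N by rewrite (bigD1 j) //= leq_addr.
  rewrite /K -addnn; lia.
pose G j := Ghom mu K (g j).
have Hhom := hom_identity mu0 Hg Hdeg HK Hid.
pose c : R[i] := ((mu%:C)%C) ^+ 6.
have c0 : 0 < c by rewrite exprn_gt0 // ltcR.
apply: (motzkin_contra (T := fun j => (Phi (G j))`_6) c0) => a b.
pose P j := map_poly (phi2 (a%:R : R[i]) b%:R) (Phi (G j)).
pose N := (K.*2 - 6)%N.
pose cc : R[i] := a%:R ^+ 2 + b%:R ^+ 2 + 1.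
pose Rq : {poly R[i]} := ((c * motz a%:R b%:R)%:P * (1%:P + cc%:P * 'X^2) ^+ N) * 'X^12.
have HP : forall j (k : nat), (P j).[k%:R] = ev (G j) (wfam R k a b).
  by move=> j k; rewrite -phi3_Phi.
have Hpoly : \sum_j P j * star (P j) = Rq.
  apply: sos_nat => k.
  under eq_bigr => j _ do rewrite HP.
  have r0 : (0 : R) < ((k ^ 2 * (a ^ 2 + b ^ 2) + k ^ 2 + 1)%N)%:R by rewrite ltr0n addn1.
  rewrite -(Hhom _ _ r0 (@ev_J_fam R n hn k a b)) (@ev_f_fam R n hn).
  rewrite /Rq hornerM hornerXn hornerM hornerC horner_exp hornerD hornerC hornerM hornerC hornerXn.
  rewrite rmorph_nat !(natrD, natrM, natrX).
  have -> : ((k%:R ^+ 2 * (a%:R ^+ 2 + b%:R ^+ 2) + k%:R ^+ 2 + 1) : R[i]) = 1 + cc * k%:R ^+ 2.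
    by rewrite /cc; ring.
  rewrite -/N; move: ((1 + cc * k%:R ^+ 2) ^+ N) => BN.
  by rewrite /c; ring.
have Hlow : forall k, (k < 6.*2)%N -> Rq`_k = 0.
  by move=> k hk; rewrite /Rq coefMXn hk.
have [_ H6] := sos_low Hpoly Hlow.
have -> : c * motz a%:R b%:R = Rq`_(6.*2).
  rewrite /Rq coefMXn ltnn subnn -horner_coef0 hornerM hornerC horner_exp hornerD hornerC.
  by rewrite hornerM hornerXn expr0n /= mulr0 addr0 expr1n mulr1.
rewrite -H6; apply: eq_bigr => j _.
by rewrite /P coef_map.
Qed.

Section Part1.
Variable R : realType.
Variable n : nat.
Local Notation C := R[i].

Lemma fform_real (z0 z1 : C) : fform z0 z1 z0^* z1^* \is Num.real.
Proof.
rewrite /fform.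
set A := z0 ^+ 2 * z1^* ^+ 2 - z0^* ^+ 2 * z1 ^+ 2.
have hA : A^* = - A by rewrite /A rmorphB /= !rmorphM /= !conjCK; ring.
have hA2 : A ^+ 2 \is Num.real by apply/CrealP; rewrite rmorphXn /= hA sqrrN.
have hz : forall z : C, z * z^* \is Num.real by move=> z; apply: ger0_real; apply: mul_conjC_ge0.
apply: realD; last by apply: realX; apply: hz.
apply: realM; first apply: realM.
- by rewrite realN realV realn.
- exact: hA2.
apply: realB; first by apply: realM; apply: hz.
by apply: realM; [apply: realn | apply: realX; apply: hz].
Qed.

Lemma fform_ge0 (z0 z1 : C) : 0 <= fform z0 z1 z0^* z1^*.
Proof.
set a := z0 ^+ 2 * z1^* ^+ 2.
set A := a - a^*.
have hA : A^* = - A by rewrite /A rmorphB /= conjCK opprB.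
have hX : 0 <= z0 * z0^* by apply: mul_conjC_ge0.
have hY : 0 <= z1 * z1^* by apply: mul_conjC_ge0.
have [x hx] : exists x : R, z0 * z0^* = (x%:C)%C by apply/complex_realP/ger0_real.
have [y hy] : exists y : R, z1 * z1^* = (y%:C)%C by apply/complex_realP/ger0_real.
have [s hs] : exists s : R, `|A| = (s%:C)%C by apply/complex_realP/ger0_real.
have hx0 : 0 <= x by rewrite -lecR rmorph0 -hx.
have hy0 : 0 <= y by rewrite -lecR rmorph0 -hy.
have hs0 : 0 <= s by rewrite -lecR rmorph0 -hs.
have hna : `|a| = z0 * z0^* * (z1 * z1^*).
  rewrite /a normrM !normrX norm_conjC !normCK; ring.
have hsle : s <= 2%:R * (x * y).
  rewrite -lecR -hs rmorphM rmorphM /= -hx -hy rmorph_nat.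
  apply: le_trans (ler_normB _ _) _.
  by rewrite norm_conjC hna mulr2n mulrDl mul1r.
have hform : fform z0 z1 z0^* z1^* =
  (((s ^+ 2) / 16%:R * (x * y - 3%:R * y ^+ 2) + y ^+ 6)%:C)%C.
  rewrite /fform -/a.
  have -> : z0^* ^+ 2 * z1 ^+ 2 = a^*.
    by rewrite /a rmorphM /= (rmorphXn (Num.conj : {rmorphism C -> C})) (rmorphXn (Num.conj : {rmorphism C -> C})) /= conjCK.
  have -> : z0 * z0^* * (z1 * z1^*) = (x%:C)%C * (y%:C)%C by rewrite hx hy.
  have -> : z1 * z1^* = (y%:C)%C by rewrite hy.
  have -> : (a - a^*) ^+ 2 = - ((s ^+ 2)%:C)%C.
    by rewrite rmorphXn /= -hs normCK -/A hA mulrN -expr2 opprK.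
  rewrite !(rmorph_nat, fmorphV, rmorphXn, rmorphM, rmorphB, rmorphD) /=.
  ring.
rewrite hform -(rmorph0 (real_complex R)) lecR.
have hq : s ^+ 2 <= 4%:R * (x * y) ^+ 2.
  have := ler_pM hs0 hs0 hsle hsle; rewrite -expr2 => h.
  by apply: le_trans h _; rewrite le_eqVlt; apply/orP; left; apply/eqP; ring.
case: (lerP (3%:R * y) x) => hxy.
  apply: addr_ge0; last by rewrite exprn_ge0.
  apply: mulr_ge0; first by rewrite divr_ge0 ?sqr_ge0 ?ler0n.
  by nra.
have F1 : 0 <= (4%:R * (x * y) ^+ 2 - s ^+ 2) * (y * (3%:R * y - x)).
  by apply: mulr_ge0; [lra | apply: mulr_ge0; lra].
have F2 : 0 <= y ^+ 3 * ((x - 2%:R * y) ^+ 2 * (x + y)).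
  by apply: mulr_ge0; [rewrite exprn_ge0 | apply: mulr_ge0; [rewrite sqr_ge0 | lra]].
have -> : s ^+ 2 / 16%:R * (x * y - 3%:R * y ^+ 2) + y ^+ 6 =
  ((4%:R * (x * y) ^+ 2 - s ^+ 2) * (y * (3%:R * y - x))
   + 4%:R * (y ^+ 3 * ((x - 2%:R * y) ^+ 2 * (x + y)))) / 16%:R by field.
by apply: divr_ge0; [lra | rewrite ler0n].
Qed.

End Part1.

Section Bal.
Variable R : realType.
Variable n : nat.
Local Notation C := R[i].

Definition bal (m : 'X_{1.. n.+1 + n.+1}) :=
  (\sum_(j < n.+1) m (lshift n.+1 j) = \sum_(j < n.+1) m (rshift n.+1 j))%N.

Lemma bal0 : bal 0%MM.
Proof. by rewrite /bal !big1 // => j _; rewrite mnm0E. Qed.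

Lemma balD m1 m2 : bal m1 -> bal m2 -> bal (m1 + m2)%MM.
Proof.
rewrite /bal => h1 h2.
under eq_bigr => j _ do rewrite mnmDE.
under [in RHS]eq_bigr => j _ do rewrite mnmDE.
by rewrite !big_split /= h1 h2.
Qed.

Lemma inPkkC (c : C) : inPkk (c%:MP : cpoly R n).
Proof.
move=> m; rewrite msuppC; case: (c == 0) => //.
by rewrite inE => /eqP ->; exact: bal0.
Qed.

Lemma inPkkD (p q : cpoly R n) : inPkk p -> inPkk q -> inPkk (p + q).
Proof.
move=> hp hq m /msuppD_le; rewrite mem_cat => /orP [] h; [exact: hp | exact: hq].
Qed.

Lemma inPkkN (p : cpoly R n) : inPkk p -> inPkk (- p).
Proof. by move=> hp m; rewrite (perm_mem (msuppN p)); apply: hp. Qed.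

Lemma inPkkB (p q : cpoly R n) : inPkk p -> inPkk q -> inPkk (p - q).
Proof. by move=> hp hq; apply: inPkkD => //; apply: inPkkN. Qed.

Lemma inPkkM (p q : cpoly R n) : inPkk p -> inPkk q -> inPkk (p * q).
Proof.
move=> hp hq m /msuppM_le /allpairsP [[m1 m2] /= [h1 h2 ->]].
exact: balD (hp _ h1) (hq _ h2).
Qed.

Lemma inPkkX (p : cpoly R n) k : inPkk p -> inPkk (p ^+ k).
Proof.
move=> hp; elim: k => [|k IH]; first by rewrite expr0 -[1]/(1%:MP); apply: inPkkC.
by rewrite exprS; apply: inPkkM.
Qed.

Lemma inPkk_zz (j k : 'I_n.+1) : inPkk (zvar R j * zbvar R k).
Proof.
move=> m /msuppM_le /allpairsP [[m1 m2] /= [h1 h2 ->]].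
move: h1 h2; rewrite /zvar /zbvar !msuppX !inE => /eqP -> /eqP ->.
rewrite /bal.
under eq_bigr => i _ do rewrite mnmDE !mnm1E.
under [in RHS]eq_bigr => i _ do rewrite mnmDE !mnm1E.
rewrite !big_split /=.
have e1 : forall a b : 'I_n.+1, (lshift n.+1 a == lshift n.+1 b) = (a == b).
  by move=> a b; apply: inj_eq; apply: lshift_inj.
have e2 : forall a b : 'I_n.+1, (rshift n.+1 a == rshift n.+1 b) = (a == b).
  by move=> a b; apply: inj_eq; apply: rshift_inj.
have e3 : forall a b : 'I_n.+1, (lshift n.+1 a == rshift n.+1 b) = false.
  move=> a b; apply/negbTE; rewrite -val_eqE /=; have := ltn_ord a; lia.
have e4 : forall a b : 'I_n.+1, (rshift n.+1 a == lshift n.+1 b) = false.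
  move=> a b; apply/negbTE; rewrite -val_eqE /=; have := ltn_ord b; lia.
have s1 : forall a : 'I_n.+1, (\sum_(i < n.+1) (lshift n.+1 a == lshift n.+1 i) = 1)%N.
  move=> a; rewrite (bigD1 a) //= eqxx big1 // => i hi.
  by rewrite e1 eq_sym (negbTE hi).
have s2 : forall a : 'I_n.+1, (\sum_(i < n.+1) (rshift n.+1 a == rshift n.+1 i) = 1)%N.
  move=> a; rewrite (bigD1 a) //= eqxx big1 // => i hi.
  by rewrite e2 eq_sym (negbTE hi).
have s3 : forall a : 'I_n.+1, (\sum_(i < n.+1) (lshift n.+1 a == rshift n.+1 i) = 0)%N.
  by move=> a; rewrite big1 // => i _; rewrite e3.
have s4 : forall a : 'I_n.+1, (\sum_(i < n.+1) (rshift n.+1 a == lshift n.+1 i) = 0)%N.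
  by move=> a; rewrite big1 // => i _; rewrite e4.
by rewrite s1 s2 s3 s4.
Qed.

Lemma inPkk_zz' (j k : 'I_n.+1) : inPkk (zbvar R k * zvar R j).
Proof. by rewrite mulrC; apply: inPkk_zz. Qed.

Lemma inPkk_f : inPkk (fpoly R n).
Proof.
rewrite /fpoly -!exprMn.
apply: inPkkD; last by apply: inPkkX; apply: inPkk_zz.
apply: inPkkM; first apply: inPkkM.
- by apply: inPkkN; apply: inPkkC.
- by apply: inPkkX; apply: inPkkB; apply: inPkkX; [apply: inPkk_zz | apply: inPkk_zz'].
- apply: inPkkB; first by apply: inPkkM; apply: inPkk_zz.
  by apply: inPkkM; [apply: inPkkC | apply: inPkkX; apply: inPkk_zz].
Qed.

End Bal.


Theorem proposition4p6 (R : realType) (n : nat) (mu : R) :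
  (2 <= n)%N -> 0 < mu ->
  (* f lies in R_{0,mu} *)
  (inPkk (fpoly R n) /\ realvalued (fpoly R n) /\
   (forall w : 'I_n.+1 -> R[i], ev (Jpoly R n) w = (mu%:C)%C -> 0 <= ev (fpoly R n) w))
  /\
  (* f is not a sum of hermitian squares plus a multiple of J - mu *)
  ~ (exists (l : nat) (g : 'I_l -> cpoly R n) (h : cpoly R n),
       (forall j, inPkk (g j)) /\ inPkk h /\ realvalued h /\
       forall w : 'I_n.+1 -> R[i],
         ev (fpoly R n) w =
           \sum_(j < l) (ev (g j) w)^* * ev (g j) w
           + (ev (Jpoly R n) w - (mu%:C)%C) * ev h w).
Proof.
move=> hn mu0; split.
  split; first exact: inPkk_f.
  split; first by move=> w; rewrite ev_f; apply: fform_real.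
  by move=> w _; rewrite ev_f; apply: fform_ge0.
exact: not_rep hn mu0.
Qed.
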